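(* Consider binary operation $\wedge$ on $\{0,1\}$ defined by $1\wedge1=1\wedge0=0\wedge0=1$ and $0\wedge1=0$. For $n\ge0$, the number of walks $0=y_0,y_1,\dots,y_n=1$ with steps $y_i-y_{i-1}\in\{-2,-1,1,2\}$ and $y_i\ge0$ for all $i$ equals the number of complete bracketings (full binary parenthesizations) of the word $0\wedge0\wedge\cdots\wedge0$ with $n+2$ zeroes whose value is $0$. *)

(* Defs.v *)
From mathcomp Require Import all_boot all_order all_algebra.
From Stdlib Require Import List.
Set Implicit Arguments. Unset Strict Implicit. Unset Printing Implicit Defensive.
Import GRing.Theory Num.Theory.

(* The values 0 and 1 are encoded as false and true. *)
Definition wedge (a b : bool) : bool :=
  match a, b with
  | true, true => true
  | true, false => true
  | false, false => true
  | false, true => false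
  end.

(* Full binary parenthesizations of a word all of whose letters are 0:
   binary trees whose leaves are the zeroes. *)
Inductive bracketing : Type :=
  | Leaf : bracketing
  | Node : bracketing -> bracketing -> bracketing.

Fixpoint nleaves (t : bracketing) : nat :=
  match t with
  | Leaf => 1
  | Node l r => nleaves l + nleaves r
  end.

Fixpoint bval (t : bracketing) : bool :=
  match t with
  | Leaf => false
  | Node l r => wedge (bval l) (bval r)
  end.

Definition stepv (k : 'I_4) : int :=
  match val k with
  | 0 => (-2)%R
  | 1 => (-1)%R
  | 2 => 1%R
  | _ => 2%R
  end.

Definition wpos n (t : n.-tuple 'I_4) (i : nat) : int :=
  (\sum_(s <- take i (map stepv t)) s)%R.

Definition good_walk n (t : n.-tuple 'I_4) : bool :=
  [forall i : 'I_n.+1, (0 <= wpos t i)%R] && (wpos t n == 1%R).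

(* Main.v *)
From HB Require Import structures.
Require Import Defs.
From mathcomp Require Import all_boot all_order all_algebra.
From mathcomp Require Import zify ring.
From Stdlib Require Import Setoid Morphisms.
Set Implicit Arguments. Unset Strict Implicit. Unset Printing Implicit Defensive.
Import Order.TTheory GRing.Theory Num.Theory.

Definition nbsum (G : nat -> nat) (k : nat) : nat :=
  G k.+1 + G k.+2 + (match k with 0 => 0 | k'.+1 => G k' end)
  + (match k with k'.+2 => G k' | _ => 0 end).

Fixpoint W (n h k : nat) : nat :=
  match n with 0 => (h == k) : nat | n'.+1 => nbsum (W n' h) k end.

Lemma nbsum_ext G G' k : (forall u, G u = G' u) -> nbsum G k = nbsum G' k.
Proof. by move=> e; rewrite /nbsum !e; case: k => [|[|k]]; rewrite ?e. Qed.

Lemma nbsum_exch (H : nat -> nat -> nat) h k :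
  nbsum (fun u => nbsum (fun v => H v u) h) k = nbsum (fun v => nbsum (fun u => H v u) k) h.
Proof. rewrite /nbsum; case: k => [|[|k]]; case: h => [|[|h]] /=; lia. Qed.

Lemma nb0 h k : nbsum (fun u => (h == u) : nat) k = nbsum (fun v => (v == k) : nat) h.
Proof. rewrite /nbsum; case: k => [|[|k]]; case: h => [|[|h]] /=; rewrite ?eqSS; try lia.
Qed.

Lemma W_first n h k : W n.+1 h k = nbsum (fun v => W n v k) h.
Proof.
elim: n h k => [|n IH] h k; first by rewrite /= nb0.
rewrite [LHS]/= (nbsum_ext _ (fun u => IH h u)) nbsum_exch.
by apply: nbsum_ext => v.
Qed.

Lemma W_sym n h k : W n h k = W n k h.
Proof.
elim: n h k => [|n IH] h k; first by rewrite /= eq_sym.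
rewrite [RHS]W_first /=; apply: nbsum_ext => u; exact: IH.
Qed.

Lemma nbsumD G G' k : nbsum (fun u => G u + G' u) k = nbsum G k + nbsum G' k.
Proof. rewrite /nbsum; case: k => [|[|k]] /=; lia. Qed.

Lemma nbsumM c G k : nbsum (fun u => c * G u) k = c * nbsum G k.
Proof. rewrite /nbsum; case: k => [|[|k]] /=; lia. Qed.

Lemma nbsum_sum m (F : nat -> nat -> nat) k :
  nbsum (fun u => \sum_(i < m) F i u) k = \sum_(i < m) nbsum (F i) k.
Proof.
elim: m => [|m IH]; first by rewrite /nbsum; case: k => [|[|k]]; rewrite !big_ord0.
rewrite big_ord_recr /= -IH -nbsumD; apply: nbsum_ext => u; by rewrite big_ord_recr.
Qed.

Lemma nbsum_shift G k :
  nbsum G k.+1 = (if k < 2 then G 0 else 0) + nbsum (fun u => G u.+1) k.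
Proof. rewrite /nbsum; case: k => [|[|k]] /=; lia. Qed.

Definition V m j := W m 0 j + W m 1 j.

Definition hterm n h k := match h with 0 => 0 | h'.+1 => W n h' k end.

Lemma L_decomp n h k :
  W n.+1 h k.+1 = hterm n.+1 h k + \sum_(i < n.+1) W i h 0 * V (n - i) k.
Proof.
elim: n k => [|n IH] k.
  rewrite big_ord1 /hterm /V /= /nbsum.
  case: h => [|[|[|h]]]; case: k => [|[|[|k]]] /=; rewrite ?eqSS; lia.
rewrite [W n.+2 h k.+1]/= nbsum_shift (nbsum_ext _ (fun u => IH u)).
rewrite nbsumD (nbsum_sum _ (fun i u => W i h 0 * V (n - i) u)).
rewrite [\sum_(i < n.+2) _]big_ord_recr /= subnn.
have -> : hterm n.+2 h k = nbsum (hterm n.+1 h) k.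
  rewrite /hterm; case: (h) => [|h'] //; by rewrite /nbsum; case: (k) => [|[|k']].
have -> : W n.+1 h 0 * V 0 k = if k < 2 then W n.+1 h 0 else 0.
  by rewrite /V /=; case: k => [|[|k]] /=; lia.
have -> : \sum_(i < n.+1) nbsum (fun u => W i h 0 * V (n - i) u) k =
          \sum_(i < n.+1) W i h 0 * V (n.+1 - i) k.
  apply: eq_bigr => i _; rewrite nbsumM /V nbsumD.
  have hi : i <= n by rewrite -ltnS.
  by rewrite subSn // !W_first.
change (nbsum (W n h) 0) with (W n.+1 h 0).
set x := (if _ then _ else _); set y := nbsum _ _; set z := \sum_(i < _) _; lia.
Qed.

Fixpoint beq (t u : bracketing) : bool :=
  match t, u with
  | Leaf, Leaf => true
  | Node a b, Node c d => beq a c && beq b d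
  | _, _ => false
  end.

Lemma beqP : Equality.axiom beq.
Proof.
elim=> [|a IHa b IHb] [|c d] /=; try by constructor.
apply: (iffP andP) => [[/IHa -> /IHb ->]//|[<- <-]].
by split; [apply/IHa|apply/IHb].
Qed.

HB.instance Definition _ := hasDecEq.Build bracketing beqP.

Fixpoint trees (fuel m : nat) : seq bracketing :=
  match fuel with
  | 0 => [::]
  | fuel'.+1 =>
    if m == 1 then [:: Leaf] else
    flatten [seq [seq Node l r | l <- trees fuel' i, r <- trees fuel' (m - i)]
            | i <- iota 1 m.-1]
  end.

Lemma nleaves_gt0 t : 0 < nleaves t.
Proof. elim: t => //= a IHa b IHb; lia. Qed.

Lemma trees_sound fuel m t : t \in trees fuel m -> nleaves t = m.
Proof.
elim: fuel m t => [|f IH] m t //=.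
case: ifP => [/eqP -> | _]; first by rewrite inE => /eqP ->.
case/flatten_mapP => i; rewrite mem_iota => hi /allpairsP [[l r] /= [hl hr ->]].
rewrite /= (IH _ _ hl) (IH _ _ hr); lia.
Qed.

Lemma mem_trees fuel m t : m <= fuel -> (t \in trees fuel m) = (nleaves t == m).
Proof.
move=> hm; apply/idP/idP => [/trees_sound -> //|/eqP].
elim: fuel m t hm => [|f IH] m t hm ht.
  by move: (nleaves_gt0 t); rewrite ht; lia.
rewrite /=; case: ifP => [/eqP m1 | m1].
  case: t ht => [|a b] //= hab; move: (nleaves_gt0 a) (nleaves_gt0 b); lia.
case: t ht => [|a b] /= ht; first by move: m1; rewrite -ht.
apply/flatten_mapP; exists (nleaves a).
  rewrite mem_iota; move: (nleaves_gt0 a) (nleaves_gt0 b); lia.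
apply/allpairsP; exists (a, b) => /=; split => //; apply: IH => //.
- move: (nleaves_gt0 b); lia.
- move: (nleaves_gt0 a); lia.
- lia.
Qed.

Lemma uniq_flatten_map (T : eqType) (F : nat -> seq T) idx :
  (forall i, uniq (F i)) -> (forall i j x, x \in F i -> x \in F j -> i = j) ->
  uniq idx -> uniq (flatten (map F idx)).
Proof.
move=> uF dF; elim: idx => [|i idx IH] //= /andP [ni ui].
rewrite cat_uniq uF IH // andbT /=; apply/hasPn => x /flatten_mapP [j hj hx].
apply/negP => hx'; move: ni; by rewrite (dF _ _ _ hx' hx) hj.
Qed.

Lemma uniq_trees fuel m : uniq (trees fuel m).
Proof.
elim: fuel m => [|f IH] m //=; case: ifP => // _.
apply: uniq_flatten_map; last exact: iota_uniq.
- move=> i; apply: allpairs_uniq => //; by move=> [a b] [c d] _ _ /= [-> ->].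
- move=> i j x /allpairsP [[a b] /= [ha hb ->]] /allpairsP [[c d] /= [hc hd]] [ea eb].
  by rewrite -(trees_sound ha) -(trees_sound hc) ea.
Qed.

Lemma count_allpairs (S T U : Type) (P : pred U) (f : S -> T -> U) s t :
  count P [seq f x y | x <- s, y <- t] = \sum_(x <- s) count (fun y => P (f x y)) t.
Proof.
elim: s => [|x s IH]; first by rewrite big_nil.
by rewrite allpairs_cons count_cat IH big_cons count_map.
Qed.

Lemma sum_if (T : Type) (b : pred T) s (x y : nat) :
  \sum_(l <- s) (if b l then x else y) = count b s * x + count (predC b) s * y.
Proof.
elim: s => [|l s IH]; first by rewrite big_nil.
rewrite big_cons IH /=; case: (b l) => /=; lia.
Qed.

Definition cnt (P : pred bracketing) m := count P (trees m m).

Lemma cnt_fuel P fuel m : m <= fuel -> count P (trees fuel m) = cnt P m.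
Proof.
move=> h; apply/permP; apply: uniq_perm; rewrite ?uniq_trees // => t.
by rewrite !mem_trees.
Qed.

Definition fN := cnt (predC bval).
Definition gN := cnt bval.

Lemma trees_S f m : trees f.+1 m = if m == 1 then [:: Leaf] else
    flatten [seq [seq Node l r | l <- trees f i, r <- trees f (m - i)] | i <- iota 1 m.-1].
Proof. by []. Qed.

Lemma cnt_rec P m : 1 < m ->
  cnt P m = \sum_(1 <= i < m) \sum_(l <- trees m.-1 i)
                  count (fun r => P (Node l r)) (trees m.-1 (m - i)).
Proof.
case: m => [|m] // hm.
rewrite /cnt trees_S; case: ifP => [/eqP e|_]; first by move: hm; rewrite e.
rewrite count_flatten sumnE !big_map /index_iota subn1.
apply: eq_bigr => i _; by rewrite count_allpairs.
Qed.

Lemma fN_rec m : 1 < m -> fN m = \sum_(1 <= i < m) fN i * gN (m - i).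
Proof.
move=> hm; rewrite /fN cnt_rec //; apply: eq_big_seq => i; rewrite mem_index_iota => hi.
rewrite (eq_bigr (fun l => if bval l then 0 else gN (m - i))); last first.
  move=> l _; rewrite /= /gN -(@cnt_fuel _ m.-1); last by lia.
  case: (bval l) => /=; last by apply: eq_count => r; case: (bval r).
  by elim: (trees _ _) => //= r s ->; case: (bval r).
by rewrite sum_if (@cnt_fuel (predC bval) m.-1) ?muln0 //; lia.
Qed.

Lemma gN_rec m : 1 < m ->
  gN m = \sum_(1 <= i < m) (gN i * (fN (m - i) + gN (m - i)) + fN i * fN (m - i)).
Proof.
move=> hm; rewrite /gN cnt_rec //; apply: eq_big_seq => i; rewrite mem_index_iota => hi.
rewrite (eq_bigr (fun l => if bval l then fN (m - i) + gN (m - i) else fN (m - i))); last first.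
  move=> l _; rewrite /= /gN /fN -!(@cnt_fuel _ m.-1); try lia.
  case: (bval l) => /=.
    by rewrite addnC count_predC -count_predT; apply: eq_count => r; case: (bval r).
  by elim: (trees _ _) => //= r s ->; case: (bval r).
rewrite sum_if (@cnt_fuel bval m.-1) ?(@cnt_fuel (predC bval) m.-1) /fN /gN; lia.
Qed.

Local Open Scope ring_scope.

Definition eqm (M : nat) (p q : {poly int}) := forall i, (i < M)%N -> p`_i = q`_i.

Lemma eqm_refl M : Reflexive (eqm M). Proof. by move=> p i. Qed.
Lemma eqm_sym M : Symmetric (eqm M). Proof. by move=> p q h i /h. Qed.
Lemma eqm_trans M : Transitive (eqm M). Proof. by move=> p q r h1 h2 i hi; rewrite h1 ?h2. Qed.
Add Parametric Relation M : {poly int} (eqm M)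
  reflexivity proved by (@eqm_refl M)
  symmetry proved by (@eqm_sym M)
  transitivity proved by (@eqm_trans M) as eqm_rel.

Add Parametric Morphism M : (@GRing.add {poly int})
  with signature eqm M ==> eqm M ==> eqm M as eqm_add.
Proof. by move=> p p' hp q q' hq i hi; rewrite !coefD hp ?hq. Qed.

Add Parametric Morphism M : (@GRing.opp {poly int})
  with signature eqm M ==> eqm M as eqm_opp.
Proof. by move=> p p' hp i hi; rewrite !coefN hp. Qed.

Add Parametric Morphism M : (@GRing.mul {poly int})
  with signature eqm M ==> eqm M ==> eqm M as eqm_mul.
Proof.
move=> p p' hp q q' hq i hi; rewrite !coefM; apply: eq_bigr => j _.
rewrite hp ?hq //; [apply: leq_ltn_trans hi; exact: leq_subr|].
by apply: leq_ltn_trans hi; rewrite -ltnS.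
Qed.

Lemma eqm_eq M p q : p = q -> eqm M p q. Proof. by move=> ->. Qed.

Lemma eqm_cancelX M k p q : eqm (M + k) ('X^k * p) ('X^k * q) -> eqm M p q.
Proof.
move=> h i hi; have := h (i + k)%N; have hk : (i + k < k)%N = false by lia.
rewrite !coefXnM hk addnK; apply; lia.
Qed.

Lemma test M (F G : {poly int}) : eqm M F ('X + F * G) -> eqm M G (F * F + G * (F + G)) ->
  eqm M ('X * G) (F * F * (F + G)).
Proof.
move=> h1 h2.
have hx : eqm M 'X (F - F * G).
  symmetry; rewrite {1}h1; apply: eqm_eq; ring.
rewrite hx.
have -> : (F - F * G) * G = F * (G - G * G) by ring.
rewrite {1}h2. apply: eqm_eq; ring.
Qed.

Definition convZ (u v : nat -> int) n := \sum_(i < n.+1) u i * v (n - i)%N.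
Definition fZ i : int := (fN i)%:Z.
Definition gZ i : int := (gN i)%:Z.

Lemma Posz_sum m n (F : nat -> nat) :
  ((\sum_(m <= i < n) F i)%N)%:Z = \sum_(m <= i < n) (F i)%:Z.
Proof. exact: (big_morph Posz PoszD (erefl _)). Qed.

Lemma sum_ends (F : nat -> int) m : F 0%N = 0 -> F m = 0 ->
  \sum_(i < m.+1) F i = \sum_(1 <= i < m) F i.
Proof.
move=> h0 hm; case: m hm => [|m] hm; first by rewrite big_ord1 h0 big_geq.
rewrite -(big_mkord xpredT) big_ltn // h0 add0r big_nat_recr //= hm addr0.
by [].
Qed.

Lemma fZ0 : fZ 0 = 0. Proof. by []. Qed.
Lemma gZ0 : gZ 0 = 0. Proof. by []. Qed.
Lemma fZ1 : fZ 1 = 1. Proof. by []. Qed.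
Lemma gZ1 : gZ 1 = 0. Proof. by []. Qed.
Lemma fZ2 : fZ 2 = 0. Proof. by []. Qed.
Lemma gZ2 : gZ 2 = 1. Proof. by []. Qed.

Lemma fZ_rec m : fZ m = (m == 1%N)%:R + convZ fZ gZ m.
Proof.
case: m => [|[|m]]; first by rewrite /convZ big_ord1 fZ0 mul0r.
  by rewrite /convZ !big_ord_recr big_ord0 /= fZ0 gZ0 fZ1 gZ1; ring.
rewrite {1}/fZ fN_rec // Posz_sum /convZ (@sum_ends (fun i => fZ i * gZ (m.+2 - i)%N)).
- by rewrite add0r; apply: eq_bigr => i _; rewrite PoszM.
- by rewrite fZ0 mul0r.
- by rewrite subnn gZ0 mulr0.
Qed.

Lemma gZ_rec m : gZ m = convZ fZ fZ m + convZ gZ (fun i => fZ i + gZ i) m.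
Proof.
case: m => [|[|m]]; first by rewrite /convZ !big_ord1 fZ0 gZ0 !mul0r addr0.
  by rewrite /convZ !big_ord_recr !big_ord0 /= fZ0 gZ0 fZ1 gZ1; ring.
rewrite {1}/gZ gN_rec // /convZ /=.
rewrite (@sum_ends (fun i => fZ i * fZ (m.+2 - i)%N)).
rewrite (@sum_ends (fun i => gZ i * (fZ (m.+2 - i)%N + gZ (m.+2 - i)%N))).
- rewrite Posz_sum -big_split /=; apply: eq_bigr => i _.
  rewrite PoszD !PoszM PoszD /fZ /gZ; ring.
- by rewrite gZ0 mul0r.
- by rewrite subnn fZ0 gZ0 addr0 mulr0.
- by rewrite fZ0 mul0r.
- by rewrite subnn fZ0 mulr0.
Qed.

Definition ser (M : nat) (u : nat -> int) : {poly int} := \poly_(i < M) u i.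

Lemma serD M u v : ser M u + ser M v = ser M (fun i => u i + v i).
Proof. by apply/polyP => i; rewrite coefD !coef_poly; case: ifP; rewrite ?addr0. Qed.

Lemma coef_serM M u v i : (i < M)%N -> (ser M u * ser M v)`_i = convZ u v i.
Proof.
move=> hi; rewrite coefM /convZ; apply: eq_bigr => j _; rewrite !coef_poly.
have hj : (j < M)%N by apply: leq_ltn_trans hi; rewrite -ltnS.
have hj' : (i - j < M)%N by apply: leq_ltn_trans hi; exact: leq_subr.
by rewrite hj hj'.
Qed.

Lemma eqm_le N M p q : (N <= M)%N -> eqm M p q -> eqm N p q.
Proof. by move=> hNM h i hi; apply: h; apply: leq_trans hNM. Qed.

Lemma TF M : eqm M (ser M fZ) ('X + ser M fZ * ser M gZ).
Proof.
move=> i hi; rewrite coefD coefX coef_serM // coef_poly hi; exact: fZ_rec.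
Qed.

Lemma TG M : eqm M (ser M gZ) (ser M fZ * ser M fZ + ser M gZ * (ser M fZ + ser M gZ)).
Proof.
move=> i hi; rewrite serD coefD !coef_serM // coef_poly hi; exact: gZ_rec.
Qed.

Definition aT n := convZ fZ gZ n.+2.
Definition eT n := convZ fZ fZ n.+2.
Definition dT n := aT n + (if n is m.+1 then convZ aT aT m else 0).
Definition cT n := eT n + (if n is m.+1 then convZ aT (fun i => eT i + aT i) m else 0).

Lemma conv01 u v : u 0%N = 0 -> v 0%N = 0 -> convZ u v 0 = 0 /\ convZ u v 1 = 0.
Proof.
move=> hu hv; rewrite /convZ !big_ord_recr !big_ord0 /= hu hv; split; ring.
Qed.

Lemma XshiftA M u v (w : nat -> int) : u 0%N = 0 -> v 0%N = 0 ->
  (forall n, w n = convZ u v n.+2) ->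
  eqm M ('X^2 * ser M w) (ser M u * ser M v).
Proof.
move=> hu hv hw i hi; rewrite coefXnM coef_serM //.
case: ifP => h2.
  have [h0 h1] := conv01 hu hv; by case: i hi h2 => [|[|i]] // _ _; rewrite ?h0 ?h1.
rewrite coef_poly; case: i hi h2 => [|[|i]] // hi _.
have -> : (i.+2 - 2 = i)%N by lia.
by rewrite ifT ?hw //; apply: leq_trans hi; lia.
Qed.

Lemma KA M : eqm M ('X^5 * ser M aT) ('X^6 * (ser M eT * (ser M eT + ser M aT))).
Proof.
set F := ser M fZ; set G := ser M gZ; set A := ser M aT; set E := ser M eT.
have hA : eqm M ('X^2 * A) (F * G) by apply: XshiftA => //; rewrite ?fZ0 ?gZ0.
have hE : eqm M ('X^2 * E) (F * F) by apply: XshiftA => //; rewrite ?fZ0.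
have h1 := @TF M; have h2 := @TG M; rewrite -/F -/G in h1 h2.
have hx : eqm M 'X (F - F * G).
  symmetry; rewrite {1}h1; apply: eqm_eq; ring.
have K1 : eqm M ('X * G) (F * F * (F + G)).
  rewrite hx.
  have -> : (F - F * G) * G = F * (G - G * G) by ring.
  rewrite {1}h2; apply: eqm_eq; ring.
have -> : 'X^5 * A = 'X^2 * F * ('X * G) + 'X^3 * ('X^2 * A - F * G) by ring.
rewrite hA K1.
have -> : 'X^6 * (E * (E + A)) = 'X^2 * ('X^2 * E) * ('X^2 * E + 'X^2 * A) by ring.
rewrite hA hE; apply: eqm_eq; ring.
Qed.

Definition Sys (a c d e : nat -> int) :=
  [/\ e 0%N = 1, a 0%N = 0, d 0%N = 0, c 0%N = 1 &
   forall n, [/\ e n.+1 = a n + d n, a n.+1 = convZ e (fun i => e i + a i) n,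
                d n.+1 = convZ e (fun i => a i + c i) n &
                c n.+1 = e n.+1 + convZ a (fun i => e i + a i) n]].

Section Tree.
Variable N : nat.
Let M := (N + 5)%N.
Let F := ser M fZ.
Let G := ser M gZ.
Let A := ser M aT.
Let E := ser M eT.
Let C := ser M cT.
Let D := ser M dT.

Lemma hAA : eqm N A ('X * (E * (E + A))).
Proof.
apply: (@eqm_cancelX N 5); have := @KA M; rewrite -/A -/E => h; rewrite h.
apply: eqm_eq; ring.
Qed.

Lemma hEE : eqm N E ((1 + 'X * A) ^+ 2).
Proof.
have hA : eqm M ('X^2 * A) (F * G) by apply: XshiftA => //; rewrite ?fZ0 ?gZ0.
have hE : eqm M ('X^2 * E) (F * F) by apply: XshiftA => //; rewrite ?fZ0.
have h1 := @TF M; rewrite -/F -/G in h1.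
have hF : eqm M F ('X + 'X^2 * A) by rewrite {1}h1 -hA.
apply: (@eqm_cancelX N 2); apply: (@eqm_le _ M); first by rewrite /M leq_add2l.
rewrite hE hF; apply: eqm_eq; ring.
Qed.

Lemma hDD : eqm M D (A + 'X * (A * A)).
Proof.
move=> i hi; rewrite coefD coefXM !coef_poly hi /dT.
case: i hi => [|i] hi //=.
by rewrite coef_serM //; apply: ltnW.
Qed.

Lemma hCC : eqm M C (E + 'X * (A * (E + A))).
Proof.
move=> i hi; rewrite coefD coefXM !coef_poly hi /cT.
case: i hi => [|i] hi //=.
by rewrite serD coef_serM //; apply: ltnW.
Qed.

Lemma hDD2 : eqm N D ('X * (E * (A + C))).
Proof.
have le : (N <= M)%N by rewrite /M leq_addr.
rewrite (eqm_le le hDD) (eqm_le le hCC).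
have -> : 'X * (E * (A + (E + 'X * (A * (E + A))))) = ('X * (E * (E + A))) * (1 + 'X * A) by ring.
rewrite -hAA; apply: eqm_eq; ring.
Qed.

End Tree.

Lemma tree_sys : Sys aT cT dT eT.
Proof.
split.
- by rewrite /eT /convZ !big_ord_recr big_ord0 /= fZ0 fZ1 fZ2; ring.
- by rewrite /aT /convZ !big_ord_recr big_ord0 /= fZ0 fZ1 fZ2 gZ0 gZ1 gZ2; ring.
- by rewrite /dT /aT /convZ !big_ord_recr big_ord0 /= fZ0 fZ1 fZ2 gZ0 gZ1 gZ2; ring.
- by rewrite /cT /eT /convZ !big_ord_recr big_ord0 /= fZ0 fZ1 fZ2; ring.
move=> n; have hn : (n.+1 < n.+2)%N by [].
split.
- have := @hEE n.+2 _ hn; rewrite coef_poly ifT; last by lia.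
  move=> ->.
  have -> : (1 + 'X * ser (n.+2 + 5) aT) ^+ 2 = 1 + 'X * (ser (n.+2 + 5) aT + ser (n.+2 + 5) aT)
     + 'X * ('X * (ser (n.+2 + 5) aT * ser (n.+2 + 5) aT)) by ring.
  rewrite !coefD coef1 !coefXM /= serD coef_poly ifT; last by lia.
  rewrite /dT; case: n hn => [|n] hn /=; first by rewrite !addr0 add0r.
  rewrite coef_serM; last by lia.
  by rewrite add0r addrA.
- have := @hAA n.+2 _ hn; rewrite coef_poly ifT; last by lia.
  by move=> ->; rewrite coefXM /= serD coef_serM //; lia.
- have := @hDD2 n.+2 _ hn; rewrite coef_poly ifT; last by lia.
  by move=> ->; rewrite coefXM /= serD coef_serM //; lia.
- by [].
Qed.

Definition aw n : int := (W n 0 1)%:Z.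
Definition cw n : int := (W n 1 1)%:Z.
Definition dw n : int := (W n 0 2)%:Z.
Definition ew n : int := (W n 0 0)%:Z.

Lemma Posz_sumo m (F : nat -> nat) :
  ((\sum_(i < m) F i)%N)%:Z = \sum_(i < m) (F i)%:Z.
Proof. exact: (big_morph Posz PoszD (erefl _)). Qed.

Lemma walk_sys : Sys aw cw dw ew.
Proof.
split => // n; split.
- by rewrite /ew /aw /dw /= /nbsum /= !addn0 PoszD.
- rewrite /aw L_decomp /= add0n (Posz_sumo _ (fun i => W i 0 0 * V (n - i) 0)%N) /convZ; apply: eq_bigr => i _.
  by rewrite PoszM /V PoszD (W_sym _ 1 0).
- rewrite /dw L_decomp /= add0n (Posz_sumo _ (fun i => W i 0 0 * V (n - i) 1)%N) /convZ; apply: eq_bigr => i _.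
  by rewrite PoszM /V PoszD.
- rewrite /cw L_decomp /= PoszD (Posz_sumo _ (fun i => W i 1 0 * V (n - i) 0)%N) /convZ; congr (_ + _); apply: eq_bigr => i _.
  by rewrite PoszM /V PoszD !(W_sym _ 1 0).
Qed.

Lemma convZ_eq u v u' v' n : (forall i, (i <= n)%N -> u i = u' i /\ v i = v' i) ->
  convZ u v n = convZ u' v' n.
Proof.
move=> h; apply: eq_bigr => i _.
have hi : (i <= n)%N by rewrite -ltnS.
have [-> _] := h i hi; have [_ ->] := h (n - i)%N (leq_subr _ _); by [].
Qed.

Lemma sys_uniq a c d e a' c' d' e' : Sys a c d e -> Sys a' c' d' e' ->
  forall n, a n = a' n.
Proof.
case=> e0 a0 d0 c0 hs; case=> e0' a0' d0' c0' hs' n.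
suff H : forall n m, (m <= n)%N -> [/\ a m = a' m, c m = c' m, d m = d' m & e m = e' m].
  by case: (H n n (leqnn n)).
elim=> [|k IH] m hm.
  by move: hm; rewrite leqn0 => /eqP ->; split; rewrite ?e0 ?a0 ?c0 ?d0 ?e0' ?a0' ?c0' ?d0'.
case: (ltngtP m k.+1) hm => // [hlt _|-> _]; first exact: IH.
have [E1 A1 D1 C1] := hs k; have [E1' A1' D1' C1'] := hs' k.
have [ak ck dk ek] := IH k (leqnn k).
have he : e k.+1 = e' k.+1 by rewrite E1 E1' ak dk.
have hc : forall i, (i <= k)%N -> [/\ a i = a' i, c i = c' i, d i = d' i & e i = e' i] by move=> i /IH.
split => //.
- rewrite A1 A1'; apply: convZ_eq => i /hc [-> _ _ ->]; by [].
- rewrite C1 C1' he; congr (_ + _); apply: convZ_eq => i /hc [-> _ _ ->]; by [].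
- rewrite D1 D1'; apply: convZ_eq => i /hc [-> -> _ ->]; by [].
Qed.

Definition wposl (s : seq 'I_4) (i : nat) : int := \sum_(x <- take i (map stepv s)) x.
Definition goodZ (h : int) (s : seq 'I_4) (k : int) : bool :=
  all (fun i => 0 <= h + wposl s i) (iota 0 (size s).+1) && (h + wposl s (size s) == k).

Lemma good_walk_eq n (t : n.-tuple 'I_4) : good_walk t = goodZ 0 t 1.
Proof.
rewrite /good_walk /goodZ size_tuple; congr (_ && _); last by rewrite add0r.
apply/forallP/allP => [h i|h i].
  rewrite mem_iota add0n => hi /=; rewrite add0r; exact: (h (Ordinal hi)).
have := h i; rewrite mem_iota add0n ltn_ord /= add0r; by apply.
Qed.

Lemma all_iotaS (P : pred nat) a m : all P (iota a.+1 m) = all (fun i => P i.+1) (iota a m).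
Proof. by elim: m a => //= m IH a; rewrite IH. Qed.

Lemma goodZ_cons h x s k : goodZ h (x :: s) k = (0 <= h) && goodZ (h + stepv x) s k.
Proof.
rewrite /goodZ /wposl /= all_iotaS /= !big_cons !big_nil !addr0 !addrA.
rewrite (@eq_all _ _ (fun i => 0 <= h + stepv x + \sum_(x0 <- take i [seq stepv i | i <- s]) x0)).
  by rewrite !andbA.
by move=> i /=; rewrite big_cons addrA.
Qed.

Lemma goodZ_neg h s k : h < 0 -> goodZ h s k = false.
Proof.
by move=> hn; rewrite /goodZ /= /wposl take0 big_nil addr0 lt_geF.
Qed.

Lemma sum_tuple_cons n (F : n.+1.-tuple 'I_4 -> nat) :
  (\sum_(t : n.+1.-tuple 'I_4) F t = \sum_(x : 'I_4) \sum_(t : n.-tuple 'I_4) F [tuple of x :: t])%N.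
Proof.
rewrite pair_big /=.
rewrite (reindex (fun p : 'I_4 * n.-tuple 'I_4 => [tuple of p.1 :: p.2])) //.
exists (fun t : n.+1.-tuple 'I_4 => (thead t, [tuple of behead t])).
  move=> [x t] _ /=; rewrite theadE; congr (_, _); exact: val_inj.
move=> t _ /=; by rewrite -tuple_eta.
Qed.

Lemma card_walks n (h k : nat) :
  (\sum_(t : n.-tuple 'I_4) goodZ h%:Z t k%:Z)%N = W n h k.
Proof.
elim: n h k => [|n IH] h k.
  rewrite (eq_bigr (fun _ => (h == k) : nat)); last first.
    move=> t _; rewrite tuple0 /goodZ /= /wposl /= big_nil addr0 andbT.
    by rewrite le0z_nat /= eqz_nat.
  by rewrite sum_nat_const card_tuple card_ord expn0 mul1n.
rewrite sum_tuple_cons W_first.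
rewrite (eq_bigr (fun x : 'I_4 => \sum_(t : n.-tuple 'I_4) goodZ (h%:Z + stepv x) t k%:Z)%N);
  last by move=> x _; apply: eq_bigr => t _; rewrite goodZ_cons le0z_nat.
have sumZ : forall z : int, (\sum_(t : n.-tuple 'I_4) goodZ z t k%:Z)%N =
    (match z with Posz m => W n m k | Negz _ => 0 end)%N.
  case=> m; first exact: IH.
  by rewrite big1 // => t _; rewrite goodZ_neg.
rewrite !big_ord_recl big_ord0 /= !sumZ /nbsum.
case: h => [|[|h]] //=; rewrite ?addn0 //.
  rewrite subnn add0n -[(1 + 1)%N]/2%N -[(1 + 2)%N]/3%N; lia.
have -> : (h.+2 - (0 + 1).+1 = h)%N by lia.
have -> : (h.+2 - 1 = h.+1)%N by lia.
have -> : (h.+2 + 1 = h.+3)%N by lia.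
have -> : (h.+2 + (1 + 1) = h.+4)%N by lia.
lia.
Qed.

Lemma card_good n : #|[pred t : n.-tuple 'I_4 | good_walk t]| = W n 0 1.
Proof.
rewrite -sum1_card big_mkcond /= -(card_walks n 0 1); apply: eq_bigr => t _.
by rewrite inE good_walk_eq; case: (goodZ _ _ _).
Qed.

Lemma fN_W n : fN n.+2 = W n 0 1.
Proof.
apply/eqP; rewrite -eqz_nat; apply/eqP.
have -> : (fN n.+2)%:Z = aT n by rewrite /aT -/(fZ n.+2) fZ_rec /= add0r.
exact: (sys_uniq tree_sys walk_sys).
Qed.

From Stdlib Require Import List.

Lemma In_mem (T : eqType) (x : T) (s : list T) : In x s <-> x \in s.
Proof.
elim: s => [|y s IH]; first by split.
split => [/= [->|/IH h]|]; rewrite seq.in_cons; first by rewrite eqxx.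
  by rewrite h orbT.
by case/orP => [/eqP ->|/IH]; [left|right].
Qed.

Lemma uniq_NoDup (T : eqType) (s : list T) : uniq s -> NoDup s.
Proof.
elim: s => [|x s IH] /=; first by constructor.
case/andP => hx hs; constructor; last exact: IH.
by move/In_mem; apply/negP.
Qed.

Lemma length_size (T : Type) (s : list T) : length s = size s.
Proof. by elim: s => //= x s ->. Qed.

Theorem proposition5p5 (n : nat) :
  exists s : list bracketing,
    NoDup s /\
    (forall t, In t s <-> (nleaves t = n.+2 /\ bval t = false)) /\
    length s = #|[pred t : n.-tuple 'I_4 | good_walk t]|.
Proof.
exists [seq t <- trees n.+2 n.+2 | ~~ bval t]; split.
  apply: uniq_NoDup; rewrite filter_uniq //; exact: uniq_trees.
split.
  move=> t; rewrite In_mem mem_filter mem_trees //; split.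
    by case/andP => /negbTE -> /eqP.
  by case=> -> ->; rewrite eqxx.
rewrite length_size size_filter card_good -fN_W.
by [].
Qed.
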